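(* Sorted and semi-sorted $n$-tape asynchronous automata over a finite alphabet $A$ accept the same class of languages: a language $L\subseteq(A^\ast)^n$ is accepted by some $n$-tape sorted asynchronous automaton if and only if it is accepted by some $n$-tape semi-sorted asynchronous automaton.
   Context: $A^\ast$ is the set of finite words over $A$, $[n]=\{1,\ldots,n\}$, $\$$ is a new symbol, $w\$$ is $w$ followed by $\$$. A shuffle of $(w_1,\ldots,w_n)$ is an ordering of all letters of the $w_i$ respecting the order within each $w_i$. A partial deterministic finite state automaton has a unique start state, no $\epsilon$-transitions and at most one outgoing transition per state and letter. An $n$-tape semi-sorted asynchronous automaton over $A$ is a partial deterministic finite state automaton over $A\sqcup\{\$\}$ with a partition of its state set into $n$ sets $S_1,\ldots,S_n$; it accepts $(w_1,\ldots,w_n)$ iff some shuffle of $(w_1\$,\ldots,w_n\$)$ is read along a path from the start state to an accept state in which each letter coming from $w_i\$$ is read while in a state of $S_i$. An $n$-tape sorted asynchronous automaton over $A$ is a partial deterministic finite state automaton over $A\sqcup\{\$\}$ with a partition of its state set into subsets $S_i^V$, for $V$ a proper subset of $[n]$ and $i\in[n]\setminus V$, and a final subset $S_f^{[n]}$, such that: the start state lies in $S_i^{\emptyset}$ for some $i$; an arrow is labelled $\$$ iff it goes from a state in some $S_i^V$ to a state in $S_j^U$ with $j\neq i$ and $U=V\cup\{i\}$ (or, when $V\cup\{i\}=[n]$, to $S_f^{[n]}$); arrows not labelled $\$$ starting in $S_i^V$ end in $S_j^V$ for some $j\notin V$; $S_f^{[n]}$ consists of exactly one state, which is the unique accept state;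 no arrows start in $S_f^{[n]}$. It accepts $(w_1,\ldots,w_n)$ iff some shuffle of $(w_1\$,\ldots,w_n\$)$ is read along a path from the start state to the accept state in which each letter coming from $w_i\$$ is read while in a state of some $S_i^V$. *)

(* Defs.v *)
From mathcomp Require Import all_boot.
Set Implicit Arguments. Unset Strict Implicit. Unset Printing Implicit Defensive.

(* Letters of A ⊔ {$} are encoded as option A: Some a = a, None = $. *)

(* A configuration is a state together
   with the remaining (unread) suffixes of the words w_i$. *)
Inductive accepts_from (A : finType) (n : nat) (Q : finType)
    (delta : Q -> option A -> option Q) (tp : Q -> option 'I_n) (F : pred Q)
  : Q -> ('I_n -> seq (option A)) -> Prop :=
| acc_done q u : F q -> (forall i, u i = [::]) -> accepts_from delta tp F q u
| acc_step q u i c s q' :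
    tp q = Some i -> u i = c :: s -> delta q c = Some q' ->
    accepts_from delta tp F q' (fun j => if j == i then s else u j) ->
    accepts_from delta tp F q u.

Definition init_tapes (A : finType) (n : nat) (w : 'I_n -> seq A)
  : 'I_n -> seq (option A) := fun i => map Some (w i) ++ [:: None].

Record semisorted_aut (A : finType) (n : nat) := SemiSorted {
  ss_state : finType;
  ss_start : ss_state;
  ss_delta : ss_state -> option A -> option ss_state;
  ss_part : ss_state -> 'I_n;          (* q \in S_(ss_part q) *)
  ss_accept : {set ss_state} }.

Definition ss_accepts (A : finType) (n : nat) (M : semisorted_aut A n)
    (w : 'I_n -> seq A) : Prop :=
  accepts_from (@ss_delta A n M) (fun q => Some (ss_part q))
    (fun q => q \in ss_accept M) (ss_start M) (init_tapes w).

(* Sorted automata: the label of a state q is Some (V, i) if q \in S_i^V,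
   and None if q \in S_f^[n]. *)
Definition sorted_wf (A : finType) (n : nat) (Q : finType) (q0 : Q)
    (delta : Q -> option A -> option Q)
    (lab : Q -> option ({set 'I_n} * 'I_n)) : Prop :=
  [/\ (forall q V i, lab q = Some (V, i) -> i \notin V),
      (exists i, lab q0 = Some (set0, i)),
      (forall q V i c q', lab q = Some (V, i) -> delta q c = Some q' ->
         match c with
         | None => if V :|: [set i] == setT then lab q' = None
                   else exists j, j != i /\ lab q' = Some (V :|: [set i], j)
         | Some _ => exists j, lab q' = Some (V, j)
         end),
      (exists qf, forall q, lab q = None <-> q = qf) &
      (forall q c, lab q = None -> delta q c = None)].

Record sorted_aut (A : finType) (n : nat) := Sorted {
  so_state : finType;
  so_start : so_state;
  so_delta : so_state -> option A -> option so_state;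
  so_label : so_state -> option ({set 'I_n} * 'I_n);
  so_wf : sorted_wf so_start so_delta so_label }.

(* the unique accept state is the unique state of S_f^[n] *)
Definition so_accepts (A : finType) (n : nat) (M : sorted_aut A n)
    (w : 'I_n -> seq A) : Prop :=
  accepts_from (@so_delta A n M) (fun q => omap snd (so_label q))
    (fun q => so_label q == None) (so_start M) (init_tapes w).

(* Main.v *)
Require Import Defs.
From mathcomp Require Import all_boot.
Set Implicit Arguments. Unset Strict Implicit. Unset Printing Implicit Defensive.

Lemma acc_mono (A : finType) (n : nat) (Q : finType)
  (delta : Q -> option A -> option Q)
  (tp1 tp2 : Q -> option 'I_n) (F1 F2 : pred Q) :
  (forall q i c q', tp1 q = Some i -> delta q c = Some q' -> tp2 q = Some i) ->
  (forall q, F1 q -> F2 q) ->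
  forall q u, accepts_from delta tp1 F1 q u -> accepts_from delta tp2 F2 q u.
Proof.
move=> Htp HF q u; elim => {q u} [q u Fq Hu | q u i c s q' Hi Hu Hd _ IH].
  by apply: acc_done; auto.
exact: (acc_step (Htp _ _ _ _ Hi Hd) Hu Hd IH).
Qed.

Definition good (A : finType) (n : nat) (u : 'I_n -> seq (option A)) :=
  forall i, u i = [::] \/ exists x, u i = map Some x ++ [:: None].

Lemma good_step (A : finType) (n : nat) (u : 'I_n -> seq (option A)) i c s :
  good u -> u i = c :: s ->
  [/\ good (fun j => if j == i then s else u j),
      (c = None -> s = [::]) & (forall a, c = Some a -> s <> [::])].
Proof.
move=> Hg Hu; have [|[x Hx]] := Hg i; first by rewrite Hu.
rewrite Hx in Hu; case: x Hx Hu => [|a x] Hx /= [<- <-]; split => //.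
- move=> j; case: eqP => _; [by left|exact: Hg].
- move=> j; case: eqP => _; [by right; exists x|exact: Hg].
- by move=> b _; case: x Hx.
Qed.

Section Constr.
End Constr.

Definition lab (A : finType) (n : nat) (M : semisorted_aut A n)
  (x : option (ss_state M * {set 'I_n})) : option ({set 'I_n} * 'I_n) :=
  match x with
  | None => None
  | Some (q, V) => if @ss_part _ _ M q \in V then Some (set0, @ss_part _ _ M q)
                   else Some (V, @ss_part _ _ M q)
  end.

Definition dl (A : finType) (n : nat) (M : semisorted_aut A n)
  (x : option (ss_state M * {set 'I_n})) (c : option A)
  : option (option (ss_state M * {set 'I_n})) :=
  match x with
  | None => None
  | Some (q, V) =>
    if @ss_part _ _ M q \in V then None else
    match @ss_delta _ _ M q c with
    | None => None
    | Some q' =>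
      match c with
      | Some _ => if @ss_part _ _ M q' \in V then None else Some (Some (q', V))
      | None => if V :|: [set @ss_part _ _ M q] == setT then
                  (if q' \in ss_accept M then Some None else None)
                else if @ss_part _ _ M q' \in V :|: [set @ss_part _ _ M q] then None
                else Some (Some (q', V :|: [set @ss_part _ _ M q]))
      end
    end
  end.

Lemma dl_wf (A : finType) (n : nat) (M : semisorted_aut A n) :
  sorted_wf (Some (ss_start M, set0)) (@dl A n M) (@lab A n M).
Proof.
split.
- move=> [[q W]|] V i //=; case: ifP => h [<- <-]; by rewrite ?in_set0 ?h.
- by exists (@ss_part _ _ M (ss_start M)); rewrite /= in_set0.
- move=> [[q W]|] V i c x' //=; case: ifP => h //= [<- <-].
  case: (@ss_delta _ _ M q c) => [q'|] //; case: c => [a|].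
    by case: ifP => // h' [<-] /=; rewrite h'; eauto.
  case: ifP => hT; first by case: ifP => // _ [<-].
  case: ifP => // h' [<-] /=; rewrite h'; exists (@ss_part _ _ M q'); split => //.
  by apply/negP => /eqP E; rewrite E !inE eqxx orbT in h'.
- by exists None => -[[q V]|] /=; split => //; case: ifP.
- by move=> [[q V]|] c //=; case: ifP.
Qed.

Lemma stuck (A : finType) (n : nat) (M : semisorted_aut A n) q u :
  accepts_from (@ss_delta A n M) (fun q => Some (@ss_part _ _ M q))
    (fun q => q \in ss_accept M) q u ->
  u (@ss_part _ _ M q) = [::] -> forall j, u j = [::].
Proof. by case => [//|q0 u0 i c s q' [<-] ->]. Qed.

Lemma empty_acc (A : finType) (n : nat) (M : semisorted_aut A n) q u :
  accepts_from (@ss_delta A n M) (fun q => Some (@ss_part _ _ M q))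
    (fun q => q \in ss_accept M) q u ->
  (forall j, u j = [::]) -> q \in ss_accept M.
Proof. by case => // q0 u0 i c s q' _ Hu _ _ /(_ i); rewrite Hu. Qed.

Lemma ss2so (A : finType) (n : nat) (M : semisorted_aut A n) q u :
  accepts_from (@ss_delta A n M) (fun q => Some (@ss_part _ _ M q))
    (fun q => q \in ss_accept M) q u ->
  good u -> @ss_part _ _ M q \notin [set i | u i == [::]] ->
  accepts_from (@dl A n M) (fun x => omap snd (lab x)) (fun x => lab x == None)
    (Some (q, [set i | u i == [::]])) u.
Proof.
elim => {q u} [q u Fq Hu | q u i c s q' [<-] Hu Hd Hacc IH] Hg Hp.
  by rewrite inE Hu eqxx in Hp.
have [Hg' Hn Hs] := good_step Hg Hu.
set u' := (fun j => if j == @ss_part _ _ M q then s else u j) in Hg' Hacc IH *.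
have Htp : omap snd (lab (Some (q, [set i | u i == [::]]))) = Some (@ss_part _ _ M q).
  by rewrite /= (negbTE Hp).
case: c Hu Hd Hn Hs => [a|] Hu Hd Hn Hs.
  have sn : s <> [::] by apply: Hs.
  have EV : [set j | u' j == [::]] = [set j | u j == [::]].
    apply/setP => j; rewrite !inE /u' /=; case: ifP => [/eqP ->|] //.
    by rewrite Hu; case: (s) sn.
  have Hq' : @ss_part _ _ M q' \notin [set j | u j == [::]].
    apply/negP => Hin; apply: sn.
    have := stuck Hacc; rewrite -EV inE in Hin => /(_ (eqP Hin) (@ss_part _ _ M q)).
    by rewrite /u' eqxx.
  have Hdl : dl (Some (q, [set i | u i == [::]])) (Some a)
             = Some (Some (q', [set i | u i == [::]])).
    by rewrite /= (negbTE Hp) Hd (negbTE Hq').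
  eapply acc_step; [exact: Htp | exact: Hu | exact: Hdl | ]; rewrite -EV; apply: IH => //; by rewrite EV.
have s0 := Hn erefl.
have EV : [set j | u' j == [::]] = [set j | u j == [::]] :|: [set @ss_part _ _ M q].
  apply/setP => j; rewrite !inE /u' /=; case: ifP => [/eqP ->|] /=; first by rewrite s0 eqxx orbT.
  by rewrite orbF.
case hT : ([set j | u j == [::]] :|: [set @ss_part _ _ M q] == setT).
  have Ha : forall j, u' j = [::].
    by move=> j; apply/eqP; have := eqP hT; rewrite -EV => /setP/(_ j); rewrite !inE.
  have Fq' : q' \in ss_accept M.
    exact: (empty_acc Hacc Ha).
  have Hdl : dl (Some (q, [set i | u i == [::]])) None = Some None.
    by rewrite /= (negbTE Hp) Hd hT Fq'.
  by eapply acc_step; [exact: Htp | exact: Hu | exact: Hdl | ]; apply: acc_done.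
have Hq' : @ss_part _ _ M q' \notin [set j | u j == [::]] :|: [set @ss_part _ _ M q].
  apply/negP => Hin; move/negP: hT; apply; apply/eqP/setP => j.
  rewrite -EV in Hin *; rewrite inE in Hin.
  by rewrite !inE (stuck Hacc (eqP Hin)).
have Hdl : dl (Some (q, [set i | u i == [::]])) None
           = Some (Some (q', [set j | u j == [::]] :|: [set @ss_part _ _ M q])).
  by rewrite /= (negbTE Hp) Hd hT (negbTE Hq').
eapply acc_step; [exact: Htp | exact: Hu | exact: Hdl | ]; rewrite -EV; apply: IH => //; by rewrite EV.
Qed.

Lemma so2ss (A : finType) (n : nat) (M : semisorted_aut A n) x u :
  accepts_from (@dl A n M) (fun x => omap snd (lab x)) (fun x => lab x == None) x u ->
  match x with
  | None => forall j, u j = [::]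
  | Some (q, V) => accepts_from (@ss_delta A n M) (fun q => Some (@ss_part _ _ M q))
                    (fun q => q \in ss_accept M) q u
  end.
Proof.
elim => {x u} [[[q V]|] u Fx Hu | [[q V]|] u i c s x' Hi Hu Hd Hacc IH] //.
- by move: Fx => /=; case: ifP.
- have Ei : i = @ss_part _ _ M q by move: Hi => /=; case: ifP => _ [<-].
  subst i; move: Hd => /=; case: ifP => // _.
  case Hd0 : (@ss_delta _ _ M q c) => [q'|] //.
  move=> Hdx; eapply acc_step; [reflexivity | exact: Hu | exact: Hd0 | ]; move: Hdx.
  case: c Hu Hd0 => [a|] Hu Hd0.
    by case: ifP => // _ [E]; subst x'.
  case: ifP => _.
    case: ifP => // Fq [E]; subst x'; exact: acc_done.
  by case: ifP => // _ [E]; subst x'.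
Qed.

Theorem mainTheorem6 (A : finType) (n : nat) (L : ('I_n -> seq A) -> Prop) :
  (exists M : sorted_aut A n, forall w, L w <-> so_accepts M w) <->
  (exists M : semisorted_aut A n, forall w, L w <-> ss_accepts M w).
Proof.
split.
  move=> [M HM].
  have [_ [i0 _] _ _ Hfin] := so_wf M.
  exists (@SemiSorted A n (so_state M) (so_start M) (@so_delta A n M)
            (fun q => oapp snd i0 (so_label q)) [set q | so_label q == None]).
  move=> w; apply: iff_trans (HM w) _; rewrite /so_accepts /ss_accepts /=; split; apply: acc_mono.
  - by move=> q i c q'; case: (so_label q) => [[V j]|] //= [<-].
  - by move=> q; rewrite inE.
  - move=> q i c q'; case E: (so_label q) => [[V j]|] /=; first by move=> [<-].
    by rewrite Hfin.
  - by move=> q; rewrite inE.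
move=> [M HM].
exists (@Sorted A n _ _ _ _ (dl_wf M)).
move=> w; apply: iff_trans (HM w) _; rewrite /so_accepts /ss_accepts /=.
have E0 : [set i | init_tapes w i == [::]] = set0.
  by apply/setP => i; rewrite !inE /init_tapes; case: (w i).
split.
  move=> H; have := ss2so H; rewrite E0; apply.
    by move=> i; right; exists (w i).
  by rewrite in_set0.
by move/so2ss.
Qed.
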